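(* If $G$ and $H$ are connected graphs, then $\mathrm{gp}(G\boxtimes H)\le \min\{n(G)\,\mathrm{gp}(H),\ n(H)\,\mathrm{gp}(G)\}$.
   Context: All graphs are finite and simple; $n(G)=|V(G)|$. The strong product $G\boxtimes H$ has vertex set $V(G)\times V(H)$, with distinct $(g,h),(g',h')$ adjacent iff ($g=g'$ or $gg'\in E(G)$) and ($h=h'$ or $hh'\in E(H)$). For a connected graph $G$, a set $S\subseteq V(G)$ is a general position set if no three pairwise distinct vertices of $S$ lie on a common geodesic (shortest path); $\mathrm{gp}(G)$ is the maximum cardinality of a general position set. *)

(* Defs.v *)
From mathcomp Require Import all_boot all_order.
From Stdlib Require Import ClassicalEpsilon.
Set Implicit Arguments. Unset Strict Implicit. Unset Printing Implicit Defensive.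

Record sgraph := SGraph {
  vert :> finType;
  adj : rel vert;
  adj_sym : symmetric adj;
  adj_irr : irreflexive adj }.

Definition norder (G : sgraph) : nat := #|G|.

(* a walk x = v0, v1, ..., vk = y is (x, p) with p = [:: v1; ...; vk];
   its length is size p. *)
Definition is_walk (G : sgraph) (x y : G) (p : seq G) : bool :=
  path (@adj G) x p && (last x p == y).

Definition connected_graph (G : sgraph) : Prop :=
  forall x y : G, exists p, is_walk x y p.

Definition geodesic (G : sgraph) (x y : G) (p : seq G) : Prop :=
  is_walk x y p /\ forall q, is_walk x y q -> size p <= size q.

Definition on_common_geodesic (G : sgraph) (u v w : G) : Prop :=
  exists x y p, geodesic x y p /\
    [/\ u \in x :: p, v \in x :: p & w \in x :: p].

Definition gp_set (G : sgraph) (S : {set G}) : Prop :=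
  forall u v w, u \in S -> v \in S -> w \in S ->
    u != v -> v != w -> u != w -> ~ on_common_geodesic u v w.

Definition pb (P : Prop) : bool :=
  if excluded_middle_informative P then true else false.

Definition gp (G : sgraph) : nat :=
  \max_(S : {set G} | pb (gp_set S)) #|S|.

Section Strong.
Variables G H : sgraph.
Definition sp_adj : rel (G * H) := fun a b =>
  (a != b) && ((a.1 == b.1) || adj a.1 b.1) && ((a.2 == b.2) || adj a.2 b.2).
Lemma sp_adj_sym : symmetric sp_adj.
Proof.
move=> a b; rewrite /sp_adj eq_sym [b.1 == _]eq_sym [b.2 == _]eq_sym.
by rewrite (adj_sym a.1) (adj_sym a.2).
Qed.
Lemma sp_adj_irr : irreflexive sp_adj.
Proof. by move=> a; rewrite /sp_adj eqxx. Qed.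
Definition strong_prod : sgraph := @SGraph (G * H)%type sp_adj sp_adj_sym sp_adj_irr.
End Strong.

(* Main.v *)
Require Import Defs.
From mathcomp Require Import all_boot all_order.
From Stdlib Require Import ClassicalEpsilon.
Set Implicit Arguments. Unset Strict Implicit. Unset Printing Implicit Defensive.

Lemma proj_path (K : sgraph) (T : Type) (f : T -> K) (e : rel T) :
  (forall a b, e a b -> (f a == f b) || adj (f a) (f b)) ->
  forall q x, path e x q ->
  exists q', is_walk (f x) (f (last x q)) q' /\ size q' <= size q.
Proof.
move=> He; elim=> [|z q IH] x /=.
  by move=> _; exists [::]; rewrite /is_walk /= eqxx.
case/andP=> exz pq; have [q' [Wq' Sq']] := IH z pq.
case/orP: (He _ _ exz) => [/eqP ->|axz].
  by exists q'; split => //; apply: leqW.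
exists (f z :: q'); split => //.
by move: Wq'; rewrite /is_walk /= axz.
Qed.

Lemma pb_true (P : Prop) : P -> pb P.
Proof. by rewrite /pb; case: excluded_middle_informative. Qed.

Lemma pb_elim (P : Prop) : pb P -> P.
Proof. by rewrite /pb; case: excluded_middle_informative. Qed.

Section Main.
Variables G H : sgraph.
Notation GH := (strong_prod G H).

Lemma sp_adjE (a b : GH) : adj a b =
  (a != b) && ((a.1 == b.1) || adj a.1 b.1) && ((a.2 == b.2) || adj a.2 b.2).
Proof. by []. Qed.

Lemma sp2 (a b : GH) : adj a b -> (a.2 == b.2) || adj a.2 b.2.
Proof. by rewrite sp_adjE => /andP [_]. Qed.
Lemma sp1 (a b : GH) : adj a b -> (a.1 == b.1) || adj a.1 b.1.
Proof. by rewrite sp_adjE => /andP [/andP [_]]. Qed.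

Lemma layer2 (S : {set GH}) (g : G) :
  gp_set S -> gp_set [set y : H | ((g, y) : GH) \in S].
Proof.
move=> gS u v w; rewrite !inE => uS vS wS uv vw uw [x [y [p [[Wp Mp] [ux vx wx]]]]].
have inj : injective (fun z : H => ((g, z) : GH)) by move=> a b [].
apply: (gS _ _ _ uS vS wS); first (by apply: contra uv => /eqP [->]);
  first (by apply: contra vw => /eqP [->]); first (by apply: contra uw => /eqP [->]).
exists ((g, x) : GH), ((g, y) : GH), (map (fun z : H => ((g, z) : GH)) p).
split; last first.
  have E : forall t : H, (((g, t) : GH) \in ((g, x) : GH) :: map (fun z : H => ((g, z) : GH)) p) = (t \in x :: p).
    by move=> t; rewrite -(mem_map inj).
  by rewrite !E.
split.
  move: Wp; rewrite /is_walk => /andP [pp /eqP lp].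
  apply/andP; split.
    elim: p x pp {lp ux vx wx Mp} => [|z p IH] x //= /andP [axz pz].
    rewrite IH // andbT /= /sp_adj /= eqxx axz orbT andbT /=.
    rewrite andbT; apply/negP => /eqP [E]; by move: axz; rewrite E adj_irr.
  by rewrite (last_map (fun z : H => ((g, z) : GH))) lp.
move=> q /andP [pq /eqP lq].
have [q' [Wq' Sq']] := @proj_path H GH (fun a : GH => a.2) (@adj GH)
  sp2 q ((g, x) : GH) pq.
rewrite size_map; apply: leq_trans Sq'; apply: Mp.
by move: Wq'; rewrite lq.
Qed.

Lemma layer1 (S : {set GH}) (h : H) :
  gp_set S -> gp_set [set y : G | ((y, h) : GH) \in S].
Proof.
move=> gS u v w; rewrite !inE => uS vS wS uv vw uw [x [y [p [[Wp Mp] [ux vx wx]]]]].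
have inj : injective (fun z : G => ((z, h) : GH)) by move=> a b [].
apply: (gS _ _ _ uS vS wS); first (by apply: contra uv => /eqP [->]);
  first (by apply: contra vw => /eqP [->]); first (by apply: contra uw => /eqP [->]).
exists ((x, h) : GH), ((y, h) : GH), (map (fun z : G => ((z, h) : GH)) p).
split; last first.
  have E : forall t : G, (((t, h) : GH) \in ((x, h) : GH) :: map (fun z : G => ((z, h) : GH)) p) = (t \in x :: p).
    by move=> t; rewrite -(mem_map inj).
  by rewrite !E.
split.
  move: Wp; rewrite /is_walk => /andP [pp /eqP lp].
  apply/andP; split.
    elim: p x pp {lp ux vx wx Mp} => [|z p IH] x //= /andP [axz pz].
    rewrite IH // andbT /= /sp_adj /= eqxx axz orbT andbT /=.
    rewrite andbT; apply/negP => /eqP [E]; by move: axz; rewrite E adj_irr.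
  by rewrite (last_map (fun z : G => ((z, h) : GH))) lp.
move=> q /andP [pq /eqP lq].
have [q' [Wq' Sq']] := @proj_path G GH (fun a : GH => a.1) (@adj GH)
  sp1 q ((x, h) : GH) pq.
rewrite size_map; apply: leq_trans Sq'; apply: Mp.
by move: Wq'; rewrite lq.
Qed.

Lemma gp_ge (K : sgraph) (S : {set K}) : gp_set S -> #|S| <= gp K.
Proof. by move=> gS; apply: (@leq_bigmax_cond _ (fun S => pb (gp_set S))) => //; apply: pb_true. Qed.

Lemma bound2 : gp GH <= norder G * gp H.
Proof.
apply/bigmax_leqP => S /pb_elim gS.
have -> : #|S| = \sum_(g : G) #|[set y : H | ((g, y) : GH) \in S]|.
  rewrite -sum1_card big_mkcond /=.
  rewrite (_ : (\sum_(i : GH) if i \in S then 1 else 0) = \sum_(g : G) \sum_(h : H) (if ((g, h) : GH) \in S then 1 else 0)); last first.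
    by rewrite (pair_bigA _ (fun (a : G) (b : H) => if ((a, b) : GH) \in S then 1 else 0)); apply: eq_bigr => -[a b].
  apply: eq_bigr => g _; rewrite -sum1_card [RHS]big_mkcond /=.
  by apply: eq_bigr => y _; rewrite inE.
rewrite /norder -sum_nat_const; apply: leq_sum => g _.
exact: gp_ge (layer2 (g:=g) gS).
Qed.

Lemma bound1 : gp GH <= norder H * gp G.
Proof.
apply/bigmax_leqP => S /pb_elim gS.
have -> : #|S| = \sum_(h : H) #|[set y : G | ((y, h) : GH) \in S]|.
  rewrite -sum1_card big_mkcond /=.
  rewrite (_ : (\sum_(i : GH) if i \in S then 1 else 0) = \sum_(g : G) \sum_(h : H) (if ((g, h) : GH) \in S then 1 else 0)); last first.
    by rewrite (pair_bigA _ (fun (a : G) (b : H) => if ((a, b) : GH) \in S then 1 else 0)); apply: eq_bigr => -[a b].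
  rewrite exchange_big /=.
  apply: eq_bigr => h _; rewrite -sum1_card [RHS]big_mkcond /=.
  by apply: eq_bigr => y _; rewrite inE.
rewrite /norder -sum_nat_const; apply: leq_sum => h _.
exact: gp_ge (layer1 (h:=h) gS).
Qed.

End Main.

Theorem corollary4p1 (G H : sgraph) :
  connected_graph G -> connected_graph H ->
  gp (strong_prod G H) <= minn (norder G * gp H) (norder H * gp G).
Proof.
by move=> _ _; rewrite leq_min bound1 bound2.
Qed.
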